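(* Let $1\le k<n$ and consider the Burnside process on $[k]^n$, with stationary distribution $$\pi(u)=\frac{(k-j_u)!}{k!\sum_{i=1}^k \left\{ {n \atop i} \right\}},$$ where $j_u$ is the number of distinct entries of $u$. Then for every $\epsilon\in(0,1)$ its mixing time satisfies $$t_{\mathrm{mix}}(\epsilon)\le\left\lceil (k-1)!\,\log\left(\epsilon^{-1}\right)\right\rceil.$$
   Context: $S_k$ acts on $[k]^n$ by $\sigma(u_1,\dots,u_n)=(\sigma(u_1),\dots,\sigma(u_n))$. The Burnside process on $[k]^n$ is the Markov chain which, from $u$, chooses $\sigma$ uniformly among permutations of $[k]$ fixing every value appearing in $u$, then produces $v\in[k]^n$ by choosing each coordinate independently and uniformly among the fixed points of $\sigma$. $\left\{ {n \atop i} \right\}$ is the Stirling number of the second kind. $t_{\mathrm{mix}}(\epsilon)=\min\{t:\max_u\|K^t(u,\cdot)-\pi\|_{TV}\le\epsilon\}$ with $\|\mu-\nu\|_{TV}=\frac12\sum|\mu-\nu|$. *)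

(* Defs.v *)
From HB Require Import structures.
From mathcomp Require Import all_boot all_order all_algebra all_fingroup.
From mathcomp Require Import reals exp.
Set Implicit Arguments. Unset Strict Implicit. Unset Printing Implicit Defensive.
Import Order.TTheory GRing.Theory Num.Theory.
Local Open Scope ring_scope.

Fixpoint stirling2 (n i : nat) : nat :=
  match n, i with
  | 0, 0 => 1
  | 0, _.+1 => 0
  | _.+1, 0 => 0
  | n'.+1, i'.+1 => i'.+1 * stirling2 n' i'.+1 + stirling2 n' i'
  end.

Section Burnside.
Variables (R : realType) (k n : nat).

Notation word := {ffun 'I_n -> 'I_k}.

Definition stab (u : word) : {set {perm 'I_k}} :=
  [set s : {perm 'I_k} | [forall i, s (u i) == u i]].

Definition fixpts (s : {perm 'I_k}) : {set 'I_k} := [set x | s x == x].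

(* One step of the Burnside process: choose s uniformly in stab u, then
   each coordinate of v independently and uniformly in fixpts s. *)
Definition burnsideK (u v : word) : R :=
  (#|stab u|%:R)^-1 *
  \sum_(s in stab u)
     (if [forall i, v i \in fixpts s] then (#|fixpts s|%:R ^+ n)^-1 else 0).

Fixpoint burnsideKt (t : nat) (u v : word) : R :=
  match t with
  | 0 => (u == v)%:R
  | t'.+1 => \sum_(w : word) burnsideKt t' u w * burnsideK w v
  end.

Definition nvals (u : word) : nat := #|[set u i | i : 'I_n]|.

Definition burnside_pi (u : word) : R :=
  ((k - nvals u)`!)%:R / ((k`!)%:R * (\sum_(1 <= i < k.+1) stirling2 n i)%:R).

Definition tv_dist (mu nu : word -> R) : R :=
  2^-1 * \sum_(v : word) `|mu v - nu v|.

(* t_mix(eps) <= T, with t_mix(eps) = min {t | max_u ||K^t(u,.) - pi||_TV <= eps}: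
   the minimum is <= T iff some t <= T belongs to the set. *)
Definition tmix_le (eps : R) (T : int) : Prop :=
  exists t : nat, (t%:Z <= T)%R /\
    forall u : word, tv_dist (burnsideKt t u) burnside_pi <= eps.

End Burnside.

(* Main.v *)
Require Import Defs.
From HB Require Import structures.
From mathcomp Require Import all_boot all_order all_algebra all_fingroup.
From mathcomp Require Import reals exp sequences.
Set Implicit Arguments. Unset Strict Implicit. Unset Printing Implicit Defensive.
Import Order.TTheory GRing.Theory Num.Theory.

Section Comb.
Variable k : nat.

Lemma card_stab n (u : {ffun 'I_n -> 'I_k}) : #|stab u| = (k - nvals u)`!.
Proof.
rewrite /nvals -[k in (k - _)%N]card_ord -[[set u i | i : 'I_n]]setCK -cardsCs -card_perm.
apply: eq_card => s; rewrite inE /perm_on; apply/forallP/subsetP.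
- move=> H x; rewrite !inE => sx; apply/imsetP => -[i _ xi].
  by move: sx; rewrite xi (eqP (H i)) eqxx.
- move=> H i; apply/negPn/negP => /H; rewrite inE => /negP; apply.
  exact: imset_f.
Qed.

Definition ext n (u : {ffun 'I_n -> 'I_k}) (x : 'I_k) : {ffun 'I_n.+1 -> 'I_k} :=
  [ffun i => if unlift ord_max i is Some j then u j else x].
Definition res n (w : {ffun 'I_n.+1 -> 'I_k}) : {ffun 'I_n -> 'I_k} :=
  [ffun j => w (lift ord_max j)].

Lemma ext_lift n u x (j : 'I_n) : ext u x (lift ord_max j) = u j.
Proof. by rewrite ffunE liftK. Qed.
Lemma ext_max n (u : {ffun 'I_n -> 'I_k}) x : ext u x ord_max = x.
Proof. by rewrite ffunE unlift_none. Qed.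

Lemma im_ext n (u : {ffun 'I_n -> 'I_k}) x :
  [set ext u x i | i : 'I_n.+1] = x |: [set u i | i : 'I_n].
Proof.
apply/setP => y; rewrite in_setU1; apply/imsetP/orP.
- move=> [i _ ->]; case: (unliftP ord_max i) => [j ->|->].
  + by right; rewrite ext_lift; apply: imset_f.
  + by left; rewrite ext_max.
- move=> [/eqP ->|/imsetP [j _ ->]].
  + by exists ord_max => //; rewrite ext_max.
  + by exists (lift ord_max j) => //; rewrite ext_lift.
Qed.

Lemma nvals_ext n (u : {ffun 'I_n -> 'I_k}) x :
  nvals (ext u x) = ((x \notin [set u i | i : 'I_n]) + nvals u)%N.
Proof. by rewrite /nvals im_ext cardsU1. Qed.

Lemma sum_words n (F : {ffun 'I_n.+1 -> 'I_k} -> nat) :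
  (\sum_w F w = \sum_(u : {ffun 'I_n -> 'I_k}) \sum_(x : 'I_k) F (ext u x))%N.
Proof.
rewrite pair_big /=.
rewrite (reindex (fun p : {ffun 'I_n -> 'I_k} * 'I_k => ext p.1 p.2)) //.
exists (fun w => (res w, w ord_max)) => [[u x] _|w _] /=.
- congr pair; last by rewrite ext_max.
  by apply/ffunP => j; rewrite ffunE ext_lift.
- apply/ffunP => i; rewrite ffunE; case: (unliftP ord_max i) => [j ->|->].
  + by rewrite ffunE.
  + by [].
Qed.

Definition Ncount n m := (\sum_(u : {ffun 'I_n -> 'I_k}) (nvals u == m))%N.

Lemma nvals_le n (u : {ffun 'I_n -> 'I_k}) : (nvals u <= k)%N.
Proof. by rewrite /nvals -[X in (_ <= X)%N]card_ord max_card. Qed.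

Lemma nvals_gt0 n (u : {ffun 'I_n.+1 -> 'I_k}) : (0 < nvals u)%N.
Proof. by apply/card_gt0P; exists (u ord0); apply: imset_f. Qed.

Lemma sum_in (A : {set 'I_k}) : (\sum_(x : 'I_k) (x \in A) = #|A|)%N.
Proof. by rewrite -sum1_card [in RHS]big_mkcond /=; apply: eq_bigr => x _; case: (x \in A). Qed.

Lemma Ncount_rec n m :
  Ncount n.+1 m.+1 = (m.+1 * Ncount n m.+1 + (k - m) * Ncount n m)%N.
Proof.
rewrite /Ncount sum_words big_distrr big_distrr -big_split /=.
apply: eq_bigr => u _.
under eq_bigr => x _ do rewrite nvals_ext.
set A := [set u i | i : 'I_n].
have nA : #|A| = nvals u by [].
have [e|ne] := eqVneq (nvals u) m.+1.
- rewrite muln1 e (gtn_eqF (ltnSn m)) muln0 addn0 -[in RHS]e -nA -sum_in.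
  apply: eq_bigr => x _.
  by case: (x \in A) => /=; rewrite ?eqxx // -[X in _ == X]add0n eqn_add2r.
have [e'|ne'] := eqVneq (nvals u) m.
- rewrite muln0 muln1 add0n -[in RHS]e' -nA -[X in (X - _)%N]card_ord .
  have -> : (#|'I_k| - #|A| = #|~: A|)%N by rewrite [in RHS]cardsCs setCK.
  rewrite -[#|~: A|]sum_in.
  apply: eq_bigr => x _; rewrite in_setC nA e'.
  by case: (x \in A) => /=; rewrite ?eqxx ?add1n ?add0n ?(ltn_eqF (ltnSn m)).
rewrite !muln0 big1 // => x _.
by case: (x \in A) => /=; rewrite ?add1n ?add0n ?eqSS ?(negbTE ne) ?(negbTE ne').
Qed.


Lemma nvals0 (u : {ffun 'I_0 -> 'I_k}) : nvals u = 0%N.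
Proof.
rewrite /nvals; apply/eqP; rewrite cards_eq0; apply/eqP/setP => y.
by rewrite inE; apply/imsetP => -[[]].
Qed.

Lemma Ncount0 m : Ncount 0 m = (m == 0%N).
Proof.
rewrite /Ncount (eq_bigr (fun _ => (0%N == m) : nat)) => [|u _]; last by rewrite nvals0.
by rewrite sum_nat_const card_ffun !card_ord expn0 mul1n eq_sym.
Qed.

Lemma Ncount_S0 n : Ncount n.+1 0 = 0%N.
Proof. by rewrite /Ncount big1 // => u _; rewrite eqn0Ngt nvals_gt0. Qed.

Lemma Ncount_formula n m : (m <= k)%N ->
  (Ncount n m * (k - m)`! = stirling2 n m * k`!)%N.
Proof.
elim: n m => [|n IH] m mk.
  by rewrite Ncount0; case: m mk => [|m] _ /=; rewrite ?subn0 ?mul1n ?mul0n.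
case: m mk => [|m] mk; first by rewrite Ncount_S0.
rewrite Ncount_rec /= mulnDl -mulnA IH // mulnDl mulnA.
congr (_ + _)%N; rewrite -mulnA -IH; last by apply: ltnW.
by rewrite -(subnSK mk) factS mulnCA.
Qed.

Lemma sum_by_nvals n (F : nat -> nat) :
  (\sum_(u : {ffun 'I_n -> 'I_k}) F (nvals u) = \sum_(i < k.+1) Ncount n i * F i)%N.
Proof.
under [RHS]eq_bigr => i _ do rewrite /Ncount big_distrl /=.
rewrite exchange_big /=; apply: eq_bigr => u _.
have hu : (nvals u < k.+1)%N by rewrite ltnS nvals_le.
rewrite (bigD1 (Ordinal hu)) //= eqxx mul1n big1 ?addn0 // => i /negbTE.
by rewrite -val_eqE /= eq_sym => ->.
Qed.

Lemma sum_fact n :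
  (\sum_(u : {ffun 'I_n.+1 -> 'I_k}) (k - nvals u)`! =
   k`! * \sum_(1 <= i < k.+1) stirling2 n.+1 i)%N.
Proof.
rewrite (sum_by_nvals n.+1 (fun j => (k - j)`!)) big_distrr.
rewrite big_ord_recl Ncount_S0 mul0n add0n big_add1 /= big_mkord.
by apply: eq_bigr => i _; rewrite /bump /= add1n Ncount_formula // mulnC.
Qed.

End Comb.

Section Real.
Local Open Scope ring_scope.
Variables (R : realType) (k n : nat).
Hypothesis hk : (0 < k)%N.
Local Notation W := {ffun 'I_n.+1 -> 'I_k}.

Definition cst : R := ((k`!)%:R * (\sum_(1 <= i < k.+1) stirling2 n.+1 i)%:R)^-1.
Definition aw (s : {perm 'I_k}) : R := (#|fixpts s|%:R ^+ n.+1)^-1.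

Lemma pi_eq (u : W) : burnside_pi R u = #|stab u|%:R * cst.
Proof. by rewrite /burnside_pi card_stab. Qed.

Lemma one_stab (u : W) : (1%g : {perm 'I_k}) \in stab u.
Proof. by rewrite inE; apply/forallP => i; rewrite perm1. Qed.

Lemma stab_neq0 (u : W) : (#|stab u|%:R : R) != 0.
Proof.
rewrite pnatr_eq0 -lt0n; apply/card_gt0P; exists 1%g; exact: one_stab.
Qed.

Lemma inK (v : W) s : [forall i, v i \in fixpts s] = (s \in stab v).
Proof. by rewrite inE; apply: eq_forallb => i; rewrite inE. Qed.

Lemma K_eq (u v : W) : burnsideK R u v =
  (#|stab u|%:R)^-1 * \sum_(s in stab u) (if s \in stab v then aw s else 0).
Proof. by rewrite /burnsideK; congr (_ * _); apply: eq_bigr => s _; rewrite inK. Qed.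

Lemma piK (u v : W) : burnside_pi R u * burnsideK R u v =
  cst * \sum_(s | (s \in stab u) && (s \in stab v)) aw s.
Proof.
rewrite pi_eq K_eq [_ * cst]mulrC -mulrA mulVKf ?stab_neq0 // -big_mkcondr.
by [].
Qed.

Lemma card_fix_gt0 (u : W) s : s \in stab u -> (0 < #|fixpts s|)%N.
Proof.
move=> hs; apply/card_gt0P; exists (u ord0).
by move: hs; rewrite inE => /forallP /(_ ord0); rewrite inE.
Qed.

Lemma rowsum (u : W) : \sum_(v : W) burnsideK R u v = 1.
Proof.
rewrite /burnsideK -mulr_sumr exchange_big /=.
rewrite (eq_bigr (fun _ => 1)) => [|s hs].
  by rewrite sumr_const mulVf ?stab_neq0 // -[1 *+ _]mulr_natr mul1r stab_neq0.
rewrite -big_mkcond /= sumr_const.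
have -> : #|[pred v : W | [forall i, v i \in fixpts s]]| = (#|fixpts s| ^ n.+1)%N.
  transitivity #|@ffun_on 'I_n.+1 (fixpts s)|; last by rewrite card_ffun_on card_ord.
  apply: eq_card => v.
  by rewrite inE; apply/forallP/ffun_onP.
rewrite -(mulr_natr ((#|fixpts s|%:R ^+ n.+1)^-1)) natrX mulVf // expf_neq0 // pnatr_eq0 -lt0n.
exact: card_fix_gt0 hs.
Qed.

Lemma stationary (v : W) :
  \sum_(u : W) burnside_pi R u * burnsideK R u v = burnside_pi R v.
Proof.
rewrite (eq_bigr (fun u => burnside_pi R v * burnsideK R v u)) => [|u _].
  by rewrite -mulr_sumr rowsum mulr1.
by rewrite !piK; congr (_ * _); apply: eq_bigl => s; rewrite andbC.
Qed.

End Real.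

Section Real2.
Local Open Scope ring_scope.
Variables (R : realType) (k n : nat).
Hypothesis hk : (0 < k)%N.
Local Notation W := {ffun 'I_n.+1 -> 'I_k}.

Lemma pi_ge0 (u : W) : 0 <= burnside_pi R u.
Proof. by rewrite /burnside_pi divr_ge0 // mulr_ge0. Qed.

Lemma sum_pi : \sum_(u : W) burnside_pi R u = 1.
Proof.
rewrite /burnside_pi -mulr_suml -natr_sum sum_fact natrM mulfV //.
rewrite -natrM pnatr_eq0 -lt0n -sum_fact.
pose u0 : W := [ffun _ => Ordinal hk].
rewrite (bigD1 u0) //=; exact: ltn_addr (fact_gt0 _).
Qed.

Lemma K_lb (u v : W) :
  ((k.-1)`!%:R)^-1 * ((#|W|)%:R)^-1 <= burnsideK R u v.
Proof.
rewrite K_eq (bigD1 1%g) ?one_stab //=.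
have -> : aw R n (1%g : {perm 'I_k}) = ((#|W|)%:R)^-1.
  rewrite /aw card_ffun !card_ord natrX; congr ((_ ^+ _)^-1).
  rewrite -[X in _ = X%:R](card_ord k); congr (_%:R); apply: eq_card => x.
  by rewrite inE perm1 eqxx.
have hW : 0 <= ((#|W|)%:R : R)^-1 by rewrite invr_ge0.
apply: ler_pM => //; first by rewrite invr_ge0.
  rewrite lef_pV2 ?posrE ?ltr0n ?fact_gt0 // ?lt0n ?stab_neq0 //; last first.
    by rewrite -(pnatr_eq0 R) stab_neq0.
  rewrite ler_nat card_stab; apply: leq_fact.
  by rewrite -subn1 leq_sub2l // nvals_gt0.
apply: ler_wpDr => //; apply: sumr_ge0 => s _; case: ifP => // _.
by rewrite /aw invr_ge0 exprn_ge0.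
Qed.

End Real2.

Section Contract.
Local Open Scope ring_scope.
Variables (R : realType) (T : finType) (K : T -> T -> R) (c : R).
Hypothesis Klb : forall u v, c <= K u v.
Hypothesis Krow : forall u, \sum_v K u v = 1.

Lemma contract (mu : T -> R) : \sum_u mu u = 0 ->
  \sum_v `|\sum_u mu u * K u v| <= (1 - #|T|%:R * c) * \sum_u `|mu u|.
Proof.
move=> h0.
have e v : \sum_u mu u * K u v = \sum_u mu u * (K u v - c).
  under [RHS]eq_bigr => u _ do rewrite mulrBr.
  by rewrite sumrB -mulr_suml h0 mul0r subr0.
under eq_bigr => v _ do rewrite e.
apply: (le_trans (y := \sum_v \sum_u `|mu u| * (K u v - c))).
  apply: ler_sum => v _; apply: (le_trans (ler_norm_sum _ _ _)).
  apply: ler_sum => u _; by rewrite normrM (ger0_norm (x := K u v - c)) ?subr_ge0 ?Klb.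
rewrite exchange_big mulr_sumr; apply: ler_sum => u _.
by rewrite -mulr_sumr sumrB Krow sumr_const -[c *+ _]mulr_natl mulrC.
Qed.

End Contract.

Section Final.
Local Open Scope ring_scope.
Variables (R : realType) (k n : nat).
Hypothesis hk : (0 < k)%N.
Local Notation W := {ffun 'I_n.+1 -> 'I_k}.
Local Notation Kt := (burnsideKt R (k:=k) (n:=n.+1)).
Local Notation pi := (burnside_pi R (k:=k) (n:=n.+1)).

Definition del : R := ((k.-1)`!%:R)^-1.

Lemma del_gt0 : 0 < del.
Proof. by rewrite /del invr_gt0 ltr0n fact_gt0. Qed.

Lemma del_le1 : del <= 1.
Proof. by rewrite /del invf_le1 ?ltr0n ?fact_gt0 // ler1n fact_gt0. Qed.

Lemma Kt_row t (u : W) : \sum_v Kt t u v = 1.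
Proof.
elim: t => [|t IH] /=.
  rewrite (bigD1 u) //= eqxx big1 ?addr0 // => v /negbTE.
  by rewrite eq_sym => ->.
rewrite exchange_big /=.
under eq_bigr => w _ do rewrite -mulr_sumr rowsum // mulr1.
exact: IH.
Qed.

Definition Dt t (u : W) := \sum_v `|Kt t u v - pi v|.

Lemma D_S t u : Dt t.+1 u <= (1 - del) * Dt t u.
Proof.
rewrite /Dt /=.
have cW : (#|W|%:R : R) != 0 by rewrite pnatr_eq0 card_ffun !card_ord expn_eq0 negb_and -lt0n hk.
have -> : (1 - del) = 1 - #|W|%:R * (del * (#|W|%:R)^-1).
  by rewrite mulrCA mulfV // mulr1.
under eq_bigr => v _ do rewrite -(stationary R v) -sumrB.
under eq_bigr => v _ do under eq_bigr => w _ do rewrite -mulrBl.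
apply: contract.
- by move=> u' v'; rewrite /del; apply: K_lb.
- exact: rowsum.
- by rewrite sumrB Kt_row sum_pi // subrr.
Qed.

Lemma D_bound t u : Dt t u <= 2 * (1 - del) ^+ t.
Proof.
elim: t u => [|t IH] u.
  rewrite expr0 mulr1 /Dt.
  apply: (le_trans (y := \sum_v (`|Kt 0 u v| + `|pi v|))).
    by apply: ler_sum => v _; apply: ler_normB.
  rewrite big_split /=.
  under eq_bigr => v _ do rewrite ger0_norm ?ler0n //.
  under [X in _ + X <= _]eq_bigr => v _ do rewrite ger0_norm ?pi_ge0 //.
  by rewrite (Kt_row 0) sum_pi.
apply: (le_trans (D_S t u)).
rewrite exprS mulrCA ler_wpM2l // ?subr_ge0 ?del_le1 //.
Qed.

Lemma tv_bound t u : tv_dist (Kt t u) pi <= (1 - del) ^+ t.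
Proof.
rewrite /tv_dist; apply: (le_trans (y := 2^-1 * (2 * (1 - del) ^+ t))).
  by rewrite ler_wpM2l ?invr_ge0 // D_bound.
by rewrite mulKf // pnatr_eq0.
Qed.

End Final.

Local Open Scope ring_scope.

Theorem theorem4p5 (R : realType) (k n : nat) (hk : (1 <= k)%N) (hkn : (k < n)%N) :
  (* pi is stationary for the Burnside process *)
  (forall v : {ffun 'I_n -> 'I_k},
     \sum_(u : {ffun 'I_n -> 'I_k}) burnside_pi R u * burnsideK R u v
     = burnside_pi R v) /\
  (* mixing time bound *)
  (forall eps : R, 0 < eps -> eps < 1 ->
     tmix_le k n eps (Num.ceil (((k.-1)`!)%:R * ln (eps^-1)))).
Proof.
case: n hkn => [//|n] hkn.
split; first exact: (stationary R).
move=> eps e0 e1.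
have lg : 0 < ln eps^-1 by apply: ln_gt0; rewrite invf_gt1.
set x := (k.-1)`!%:R * ln eps^-1.
have x0 : 0 <= x by rewrite mulr_ge0 // ltW.
have c0 : (0 <= Num.ceil x)%R by rewrite ceil_ge0 (lt_le_trans _ x0) // ltrN10.
exists `|Num.ceil x|%N; split.
  by case: (Num.ceil x) c0.
move=> u; apply: le_trans; first exact: tv_bound.
apply: (le_trans (y := expR (- del R k) ^+ `|Num.ceil x|%N)).
  apply: lerXn2r; rewrite ?nnegrE ?subr_ge0 ?del_le1 ?expR_ge0 //.
  exact: expR_ge1Dx.
rewrite -expRM_natl.
rewrite -[X in _ <= X](lnK (x:=eps)) ?posrE // ler_expR.
have ht : x <= `|Num.ceil x|%N%:R by rewrite natr_absz ger0_norm // ceil_ge.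
rewrite mulrN -[ln eps]opprK -lnV ?posrE // lerN2.
apply: (le_trans (y := x * del R k)); last by rewrite ler_wpM2r // ltW // del_gt0.
by rewrite /x /del mulrAC mulfV ?mul1r // pnatr_eq0 -lt0n fact_gt0.
Qed.
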